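(* Let $G$ and $H$ be graphs. If for every graph $K$ the conditions $G\mid K$ and $H\mid K$ together imply $G\otimes H\mid K$, then $G$ and $H$ are strongly disjoint.
   Context: A weight function on finite $U$ is $\alpha:U\times U\to\mathbb{R}$, $\alpha\ge0$, symmetric, summing to $1$; degree $p(u)=\sum_{u'}\alpha(u,u')$; a graph is $(U,\alpha)$. The tensor product of $G=(U,\alpha)$, $H=(V,\beta)$ is $G\otimes H=(U\times V,\alpha\otimes\beta)$ with $(\alpha\otimes\beta)((u,v),(u',v'))=\alpha(u,u')\beta(v,v')$. For graphs $G=(U,\alpha)$, $H=(V,\beta)$ with degrees $p,q$, $H\mid G$ means there is a surjective $\phi:U\to V$ with (i) $q(v)=\sum_{u\in\phi^{-1}(v)}p(u)$ for all $v$, and (ii) $q(v)\sum_{u'\in\phi^{-1}(v')}\alpha(u,u')=p(u)\beta(v,v')$ for all $v,v'$, $u\in\phi^{-1}(v)$. A weight joining of $\alpha,\beta$ is a weight function $\gamma$ on $U\times V$ with degree $r(u,v)=\sum_{(u',v')}\gamma((u,v),(u',v'))$ such that $\sum_v r(u,v)=p(u)$, $\sum_u r(u,v)=q(v)$, $p(u)\sum_{\tilde v}\gamma((u,v),(u',\tilde v))=\alpha(u,u')r(u,v)$ and $q(v)\sum_{\tilde u}\gamma((u,v),(\tilde u,v'))=\beta(v,v')r(u,v)$. $G,H$ are strongly disjoint if the only weight joining is $\alpha\otimes\beta$. *)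

(* Defs.v *)
From mathcomp Require Import all_boot all_order all_algebra.
From mathcomp Require Import reals.
Set Implicit Arguments. Unset Strict Implicit. Unset Printing Implicit Defensive.
Import Order.TTheory GRing.Theory Num.Theory.
Local Open Scope ring_scope.

Section Defs.
Variable R : realType.

Definition is_weight (U : finType) (a : U -> U -> R) : Prop :=
  [/\ forall u u', 0 <= a u u',
      forall u u', a u u' = a u' u &
      \sum_(u : U) \sum_(u' : U) a u u' = 1].

Definition deg (U : finType) (a : U -> U -> R) (u : U) : R :=
  \sum_(u' : U) a u u'.

Definition tensor (U V : finType) (a : U -> U -> R) (b : V -> V -> R)
  (x y : U * V) : R := a x.1 y.1 * b x.2 y.2.

(* factor V b U a  :  (V,b) | (U,a), i.e. H | G with H = (V,b), G = (U,a). *)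
Definition factor (V : finType) (b : V -> V -> R) (U : finType) (a : U -> U -> R)
  : Prop :=
  exists phi : U -> V,
    [/\ forall v, exists u, phi u = v,
        forall v, deg b v = \sum_(u | phi u == v) deg a u &
        forall v v' u, phi u = v ->
          deg b v * \sum_(u' | phi u' == v') a u u' = deg a u * b v v'].

Definition weight_joining (U V : finType) (a : U -> U -> R) (b : V -> V -> R)
  (g : U * V -> U * V -> R) : Prop :=
  [/\ is_weight g,
      forall u, \sum_(v : V) deg g (u, v) = deg a u,
      forall v, \sum_(u : U) deg g (u, v) = deg b v,
      forall u v u', deg a u * \sum_(vt : V) g (u, v) (u', vt) = a u u' * deg g (u, v) &
      forall u v v', deg b v * \sum_(ut : U) g (u, v) (ut, v') = b v v' * deg g (u, v)].

Definition strongly_disjoint (U V : finType) (a : U -> U -> R) (b : V -> V -> R)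
  : Prop :=
  forall g, weight_joining a b g -> forall x y, g x y = tensor a b x y.

End Defs.

(* Main.v *)
Require Import Defs.
From mathcomp Require Import all_boot all_order all_algebra.
From mathcomp Require Import reals.
From mathcomp Require Import exp.
Import Order.TTheory GRing.Theory Num.Theory.
Local Open Scope ring_scope.

Section Helpers.
Variable R : realType.

Lemma gibbs (g p : R) : 0 <= g -> 0 <= p -> (0 < g -> 0 < p) ->
  g * ln p - g * ln g <= p - g /\ (g * ln p - g * ln g = p - g -> g = p).
Proof.
move=> g0 p0 gp.
have [->|gne] := eqVneq g 0.
  by rewrite !mul0r subrr subr0; split => // ->.
have gpos : 0 < g by rewrite lt0r gne.
have ppos := gp gpos.
have -> : g * ln p - g * ln g = g * ln (p / g).
  by rewrite ln_div ?posrE // mulrBr.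
have [eq1|ne1] := eqVneq (p / g) 1.
  have pg : p = g by rewrite -[p](divfK gne) eq1 mul1r.
  by rewrite eq1 ln1 mulr0 pg subrr; split.
have pgpos : 0 < p / g by rewrite divr_gt0.
have lne : ln (p / g) != 0 by rewrite ln_eq0.
have H := expR_gt1Dx lne.
rewrite lnK ?posrE // in H.
have H2 : g * ln (p / g) < p - g.
  have : g * (1 + ln (p / g)) < g * (p / g) by rewrite ltr_pM2l.
  rewrite mulrDr mulr1 mulrCA divff // mulr1 => h.
  by rewrite ltrBrDl.
split; first exact: ltW.
by move=> h; move: H2; rewrite h ltxx.
Qed.

Lemma sum_fst (U V : finType) (F : U * V -> R) u :
  \sum_(x | x.1 == u) F x = \sum_v F (u, v).
Proof.
rewrite (big_mkcond (fun x => x.1 == u)) /=.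
transitivity (\sum_a \sum_v (if a == u then F (a, v) else 0)).
  by rewrite pair_big; apply: eq_bigr => -[a b] _.
rewrite (bigD1 u) //= eqxx.
rewrite [X in _ + X]big1 ?addr0 //.
by move=> a /negPf an; rewrite big1 // => v _; rewrite an.
Qed.

Lemma sum_snd (U V : finType) (F : U * V -> R) v :
  \sum_(x | x.2 == v) F x = \sum_u F (u, v).
Proof.
rewrite (big_mkcond (fun x => x.2 == v)) /=.
transitivity (\sum_a \sum_b (if b == v then F (a, b) else 0)).
  by rewrite pair_big; apply: eq_bigr => -[a b] _.
apply: eq_bigr => a _.
rewrite (bigD1 v) //= big1 ?addr0 ?eqxx //.
by move=> b /negPf ->.
Qed.

Lemma sumX (U V : finType) (F : U * V -> R) :
  \sum_x F x = \sum_u \sum_v F (u, v).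
Proof. by rewrite pair_big; apply: eq_bigr => -[a b] _. Qed.

End Helpers.
Arguments gibbs {R g p}.

Theorem proposition4p6 (R : realType) (U V : finType)
  (alpha : U -> U -> R) (beta : V -> V -> R) :
  is_weight alpha -> is_weight beta ->
  (forall (W : finType) (kappa : W -> W -> R), is_weight kappa ->
     factor alpha kappa -> factor beta kappa -> factor (tensor alpha beta) kappa) ->
  strongly_disjoint alpha beta.
Proof.
move=> [a0 asym asum] [b0 bsym bsum] Hfac g [[g0 gsym gsum] Hu Hv Hau Hbv].
set pi := tensor alpha beta.
have [u0 _] : exists u0 : U, true.
  case: (pickP (@predT U)) => [u0 _|H]; first by exists u0.
  have e : \sum_(u : U) \sum_u' alpha u u' = 0 by rewrite big_pred0.
  by move: (oner_neq0 R); rewrite -asum e eqxx.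
have [v0 _] : exists v0 : V, true.
  case: (pickP (@predT V)) => [v0 _|H]; first by exists v0.
  have e : \sum_(v : V) \sum_v' beta v v' = 0 by rewrite big_pred0.
  by move: (oner_neq0 R); rewrite -bsum e eqxx.
have dg0 : forall x, 0 <= deg g x by move=> x; apply: sumr_ge0 => y _; exact: g0.
have pi0 : forall x y, 0 <= pi x y by move=> x y; rewrite /pi /tensor mulr_ge0.
have fa : factor alpha g.
  exists fst; split.
  - by move=> u; exists (u, v0).
  - by move=> u; rewrite sum_fst Hu.
  - by move=> u u' [u1 v1] /= <-; rewrite sum_fst Hau mulrC.
have fb : factor beta g.
  exists snd; split.
  - by move=> v; exists (u0, v).
  - by move=> v; rewrite sum_snd Hv.
  - by move=> v v' [u1 v1] /= <-; rewrite sum_snd Hbv mulrC.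
have [phi [phis phid phic]] := Hfac _ g (And3 g0 gsym gsum) fa fb.
have [psi psiK] := fin_all_exists phis.
have [psi' K1 K2] := injF_bij (can_inj psiK).
have phiE : phi =1 psi' by move=> y; rewrite -{1}(K2 y) psiK.
have phi_inj : injective phi by move=> x y; rewrite !phiE => /(can_inj K2).
have dphi : forall x, deg pi (phi x) = deg g x.
  move=> x; rewrite phid (eq_bigl (pred1 x)) ?big_pred1_eq // => y.
  exact: inj_eq.
have Hiso : forall x y, g x y = pi (phi x) (phi y).
  move=> x y; have := phic (phi x) (phi y) x erefl.
  rewrite (eq_bigl (pred1 y)) ?big_pred1_eq; last by move=> z; exact: inj_eq.
  rewrite dphi; have [d0|dn0] := eqVneq (deg g x) 0.
  - move=> _; rewrite (psumr_eq0P (fun z _ => g0 x z) d0) //.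
    have d1 : deg pi (phi x) = 0 by rewrite dphi.
    by rewrite (psumr_eq0P (fun z _ => pi0 (phi x) z) d1).
  - exact: mulfI.
have MA : forall u u', \sum_v \sum_v' g (u,v) (u',v') = alpha u u'.
  move=> u u'; have [d0|dn0] := eqVneq (deg alpha u) 0.
  - have au : alpha u u' = 0 := psumr_eq0P (fun z _ => a0 u z) d0 (i:=u') isT.
    rewrite au big1 // => v _.
    have s : \sum_v0 deg g (u,v0) = 0 by rewrite Hu.
    have dgv := psumr_eq0P (fun v _ => dg0 (u,v)) s (i:=v) isT.
    by rewrite big1 // => v' _; apply: (psumr_eq0P (fun z _ => g0 (u,v) z) dgv).
  - apply: (mulfI dn0).
    transitivity (\sum_v alpha u u' * deg g (u,v)).
      by rewrite mulr_sumr; apply: eq_bigr => v _; exact: Hau.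
    by rewrite -mulr_sumr Hu mulrC.
have MB : forall v v', \sum_u \sum_u' g (u,v) (u',v') = beta v v'.
  move=> v v'; have [d0|dn0] := eqVneq (deg beta v) 0.
  - have bv : beta v v' = 0 := psumr_eq0P (fun z _ => b0 v z) d0 (i:=v') isT.
    rewrite bv big1 // => u _.
    have s : \sum_u0 deg g (u0,v) = 0 by rewrite Hv.
    have dgu := psumr_eq0P (fun u _ => dg0 (u,v)) s (i:=u) isT.
    by rewrite big1 // => u' _; apply: (psumr_eq0P (fun z _ => g0 (u,v) z) dgu).
  - apply: (mulfI dn0).
    transitivity (\sum_u beta v v' * deg g (u,v)).
      by rewrite mulr_sumr; apply: eq_bigr => u _; exact: Hbv.
    by rewrite -mulr_sumr Hv mulrC.
have MApi : forall u u', \sum_v \sum_v' pi (u,v) (u',v') = alpha u u'.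
  move=> u u'; rewrite /pi /tensor /=.
  under eq_bigr => v _ do rewrite -mulr_sumr.
  by rewrite -mulr_sumr bsum mulr1.
have MBpi : forall v v', \sum_u \sum_u' pi (u,v) (u',v') = beta v v'.
  move=> v v'; rewrite /pi /tensor /=.
  under eq_bigr => u _ do rewrite -mulr_suml.
  by rewrite -mulr_suml asum mul1r.
have margA : forall (rho : U * V -> U * V -> R) (A : U -> U -> R),
    (forall u u', \sum_v \sum_v' rho (u,v) (u',v') = alpha u u') ->
    \sum_x \sum_y rho x y * A x.1 y.1 = \sum_u \sum_u' alpha u u' * A u u'.
  move=> rho A M; rewrite sumX; apply: eq_bigr => u _.
  under eq_bigr => v _ do rewrite sumX.
  rewrite exchange_big; apply: eq_bigr => u' _ /=.
  rewrite -M mulr_suml; apply: eq_bigr => v _; rewrite mulr_suml //.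
have margB : forall (rho : U * V -> U * V -> R) (B : V -> V -> R),
    (forall v v', \sum_u \sum_u' rho (u,v) (u',v') = beta v v') ->
    \sum_x \sum_y rho x y * B x.2 y.2 = \sum_v \sum_v' beta v v' * B v v'.
  move=> rho B M; rewrite sumX exchange_big; apply: eq_bigr => v _.
  under eq_bigr => u _ do rewrite sumX exchange_big.
  rewrite exchange_big; apply: eq_bigr => v' _ /=.
  rewrite -M mulr_suml; apply: eq_bigr => u _; rewrite mulr_suml //.
have lnlem : forall rho : U * V -> U * V -> R,
    (forall u u', \sum_v \sum_v' rho (u,v) (u',v') = alpha u u') ->
    (forall v v', \sum_u \sum_u' rho (u,v) (u',v') = beta v v') ->
    (forall x y, rho x y != 0 -> 0 < alpha x.1 y.1 /\ 0 < beta x.2 y.2) ->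
    \sum_x \sum_y rho x y * ln (pi x y) =
    \sum_u \sum_u' alpha u u' * ln (alpha u u') +
    \sum_v \sum_v' beta v v' * ln (beta v v').
  move=> rho MA' MB' S.
  rewrite -(margA rho (fun u u' => ln (alpha u u'))) //.
  rewrite -(margB rho (fun v v' => ln (beta v v'))) //.
  rewrite -big_split /=; apply: eq_bigr => x _; rewrite -big_split /=.
  apply: eq_bigr => y _.
  have [->|rn] := eqVneq (rho x y) 0; first by rewrite !mul0r addr0.
  case: (S x y rn) => ha hb.
  by rewrite /pi /tensor lnM ?posrE // mulrDr.
have Sg : forall x y, g x y != 0 -> 0 < alpha x.1 y.1 /\ 0 < beta x.2 y.2.
  move=> [u v] [u' v'] /= gn; split.
  - rewrite lt0r a0 andbT; apply/eqP => au; move/eqP: gn; apply.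
    have s0 := MA u u'; rewrite au in s0.
    have inner := psumr_eq0P (fun v _ => sumr_ge0 _ (fun v' _ => g0 (u,v) (u',v'))) s0 (i:=v) isT.
    exact: (psumr_eq0P (fun v' _ => g0 (u,v) (u',v')) inner (i:=v') isT).
  - rewrite lt0r b0 andbT; apply/eqP => bv; move/eqP: gn; apply.
    have s0 := MB v v'; rewrite bv in s0.
    have inner := psumr_eq0P (fun u _ => sumr_ge0 _ (fun u' _ => g0 (u,v) (u',v'))) s0 (i:=u) isT.
    exact: (psumr_eq0P (fun u' _ => g0 (u,v) (u',v')) inner (i:=u') isT).
have Spi : forall x y, pi x y != 0 -> 0 < alpha x.1 y.1 /\ 0 < beta x.2 y.2.
  move=> x y; rewrite /pi /tensor mulf_eq0 negb_or => /andP[ha hb].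
  by rewrite !lt0r ha hb a0 b0.
have E1 : \sum_x \sum_y g x y * ln (g x y) = \sum_x \sum_y pi x y * ln (pi x y).
  under eq_bigr => x _ do under eq_bigr => y _ do rewrite Hiso.
  symmetry; rewrite (reindex_inj phi_inj); apply: eq_bigr => x _.
  by rewrite (reindex_inj phi_inj).
have spi : \sum_x \sum_y pi x y = 1.
  have h := margA pi (fun _ _ => 1) MApi.
  under eq_bigr => x _ do under eq_bigr => y _ do rewrite -[pi x y]mulr1.
  rewrite h; under eq_bigr => u _ do under eq_bigr => u' _ do rewrite mulr1.
  exact: asum.
set D := fun x y => (pi x y - g x y) - (g x y * ln (pi x y) - g x y * ln (g x y)).
have D0 : forall x y, 0 <= D x y.
  move=> x y; rewrite /D subr_ge0.
  have [] := gibbs (g0 x y) (pi0 x y) => //.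
  move=> gp; have [ha hb] := Sg x y (lt0r_neq0 gp).
  by rewrite /pi /tensor mulr_gt0.
have sD : \sum_x \sum_y D x y = 0.
  have T : forall x, \sum_y D x y = \sum_y pi x y - \sum_y g x y -
     (\sum_y g x y * ln (pi x y) - \sum_y g x y * ln (g x y)).
    by move=> x; rewrite /D !sumrB.
  rewrite (eq_bigr _ (fun x _ => T x)) !sumrB spi gsum E1.
  by rewrite lnlem // lnlem // !subrr. 
move=> x y.
have inner := psumr_eq0P (fun x _ => sumr_ge0 _ (fun y _ => D0 x y)) sD (i:=x) isT.
have Dxy := psumr_eq0P (fun y _ => D0 x y) inner (i:=y) isT.
have [_ ] := gibbs (g0 x y) (pi0 x y) (fun gp => let: conj ha hb := Sg x y (lt0r_neq0 gp) in mulr_gt0 ha hb).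
apply; apply/eqP; rewrite eq_sym -subr_eq0; apply/eqP; exact: Dxy.
Qed.
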